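(* Let $m,k\in\mathbb{N}$ and let $\beta\in\mathbb{C}$ with $\beta\notin\mathbb{Z}_0^-$ and $\frac{1+\beta}{2}-m\notin\mathbb{Z}_0^-$. Then \[ {}_3F_2\left[\begin{array}{r} -2m,\ \beta,\ -m-k-\tfrac{1}{2};\\ -2m-2k-1,\ \tfrac{1+\beta}{2}-m;\end{array}1\right]_{2m}=\frac{\left(\frac{1}{2}\right)_m\left(\frac{2+\beta+2k}{2}\right)_m}{\left(\frac{1-\beta}{2}\right)_m\left(1+k\right)_m}. \]
   Context: $\mathbb{N}=\{1,2,3,\dots\}$, $\mathbb{Z}_0^-=\{0,-1,-2,\dots\}$. For $a\in\mathbb{C}$ and $n\in\mathbb{N}_0$, $(a)_0=1$ and $(a)_n=a(a+1)\cdots(a+n-1)$ (Pochhammer symbol). For $N\in\mathbb{N}_0$, the truncated series is ${}_3F_2\left[\begin{array}{r} a_1,a_2,a_3;\\ b_1,b_2;\end{array}z\right]_N=\sum_{n=0}^{N}\frac{(a_1)_n(a_2)_n(a_3)_n}{(b_1)_n(b_2)_n}\frac{z^n}{n!}$ (the sum of the first $N+1$ terms), defined whenever $(b_1)_n(b_2)_n\neq0$ for $0\le n\le N$. *)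

(* Defs.v *)
From HB Require Import structures.
From mathcomp Require Import all_boot all_order all_algebra.
From mathcomp Require Export complex.
From mathcomp Require Import reals.
Set Implicit Arguments. Unset Strict Implicit. Unset Printing Implicit Defensive.
Import Order.TTheory GRing.Theory Num.Theory.
Local Open Scope ring_scope.

Definition poch {F : fieldType} (a : F) (n : nat) : F :=
  \prod_(i < n) (a + i%:R).

Definition F32_trunc {F : fieldType} (a1 a2 a3 b1 b2 z : F) (N : nat) : F :=
  \sum_(n < N.+1)
    (poch a1 n * poch a2 n * poch a3 n) / (poch b1 n * poch b2 n)
      * (z ^+ n / (n`!)%:R).

(* Main.v *)
Require Import Defs.
From HB Require Import structures.
From mathcomp Require Import all_boot all_order all_algebra.
From mathcomp Require Import complex reals.
From mathcomp Require Import ring zify.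
Import Order.TTheory GRing.Theory Num.Theory.
Local Open Scope ring_scope.

Section W.
Variable F : numFieldType.
Implicit Types (a b c : F).

Lemma poch0 a : poch a 0 = 1.
Proof. by rewrite /poch big_ord0. Qed.

Lemma pochS a n : poch a n.+1 = poch a n * (a + n%:R).
Proof. by rewrite /poch big_ord_recr. Qed.

Lemma pochSl a n : poch a n.+1 = a * poch (a + 1) n.
Proof.
rewrite /poch big_ord_recl addr0; congr (_ * _); apply: eq_bigr => i _.
by rewrite lift0 -nat1r addrA.
Qed.

Lemma poch_neq0 a n : (forall i, (i < n)%N -> a + i%:R != 0) -> poch a n != 0.
Proof. by move=> H; rewrite /poch; apply/prodf_neq0 => i _; apply: H. Qed.

Lemma poch_negn (j n : nat) : (j < n)%N -> poch (- j%:R : F) n = 0.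
Proof.
move=> H; rewrite /poch (bigD1 (Ordinal H)) //= addNr mul0r //.
Qed.

Lemma poch_rev a n : poch (- a - n%:R + 1) n = (-1) ^+ n * poch a n.
Proof.
elim: n a => [|n IH] a; first by rewrite !poch0 expr0 mulr1.
rewrite pochS.
have -> : - a - (n.+1)%:R + 1 = - (a + 1) - n%:R + 1 by rewrite -natr1; ring.
rewrite IH pochSl exprS.
have -> : - (a + 1) - n%:R + 1 + n%:R = - a by ring.
ring.
Qed.

Lemma two_neq0 : (2%:R : F) != 0. Proof. by rewrite pnatr_eq0. Qed.

Lemma neq0_2 {f e : F} : f != 0 -> e = 2%:R * f -> e != 0.
Proof. by move=> hf ->; rewrite mulf_neq0 // two_neq0. Qed.

Lemma divE (A B d : F) : A * d = B -> d != 0 -> A = B / d.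
Proof. by move=> <- hd; rewrite mulfK. Qed.


Definition tm b c (m n : nat) :=
  poch (- (2 * m)%N%:R) n * poch b n * poch c n /
    (poch (2%:R * c) n * poch ((1 + b) / 2%:R - m%:R) n) * (1 ^+ n / (n`!)%:R).

Definition Gm b c (m n : nat) :=
  poch (- (2 * m.+1)%N%:R) n * poch b n * poch c n /
    (poch (2%:R * c) n * poch ((1 + b) / 2%:R - m%:R) n) * (1 / (n`!)%:R) *
  (n%:R * (n%:R + 2%:R * c - 1) * (2%:R * n%:R + b - 2%:R * m%:R - 1) /
    ((2%:R * m%:R + 2%:R) * (2%:R * m%:R + 1 - b) * (2%:R * m%:R + 1 + 2%:R * c))).

Definition lam b c (m : nat) :=
  (2%:R^-1 + m%:R) * (c + 2%:R^-1 - b / 2%:R + m%:R) /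
    (((1 - b) / 2%:R + m%:R) * (c + 2%:R^-1 + m%:R)).

Lemma step b c (m n : nat) :
  (forall i : nat, (1 + b) / 2%:R - (m.+1)%:R + i%:R != 0) ->
  (forall i : nat, (i <= 2 * m.+1)%N -> 2%:R * c + i%:R != 0) ->
  (1 - b) / 2%:R + m%:R != 0 -> c + 2%:R^-1 + m%:R != 0 ->
  (n <= 2 * m.+1)%N ->
  tm b c m.+1 n - lam b c m * tm b c m n = Gm b c m n.+1 - Gm b c m n.
Proof.
move=> hx hc h7 h8 hn.
have h2 := two_neq0.
set x := (1 + b) / 2%:R - m%:R.
have ex : (1 + b) / 2%:R - (m.+1)%:R = x - 1 by rewrite /x -natr1; ring.
rewrite ex in hx.
have ea : (2 * m.+1)%N%:R = 2%:R * m%:R + 2%:R :> F by rewrite mulnS natrD natrM; ring.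
pose a : F := - (2%:R * m%:R + 2%:R).
have R1 : poch (x - 1) n = (x - 1) * poch x n / (x - 1 + n%:R).
  apply: divE; last exact: hx.
  by rewrite -pochS pochSl subrK.
have R2 : poch (- (2 * m)%N%:R) n = poch a n * ((a + n%:R) * (a + n%:R + 1)) / (a * (a + 1)).
  apply: divE.
    have e2 : a + 1 + 1 = - (2 * m)%N%:R by rewrite /a natrM; ring.
    have E1 : poch a n.+2 = poch a n * (a + n%:R) * (a + n%:R + 1).
      by rewrite !pochS -natr1 addrA.
    have E2 : poch a n.+2 = a * ((a + 1) * poch (- (2 * m)%N%:R) n).
      by rewrite pochSl pochSl e2.
    rewrite [RHS]mulrA -E1 E2; ring.
  rewrite /a mulf_neq0 //.
  - by rewrite oppr_eq0 -natrM -natrD pnatr_eq0 addn2.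
  rewrite (_ : _ + 1 = - (2%:R * m%:R + 1)); last by ring.
  by rewrite oppr_eq0 -natrM natr1 pnatr_eq0.
have en : (n.+1)%:R = n%:R + 1 :> F by rewrite natr1.
rewrite /tm /Gm ex ea -/a R1 R2 !pochS factS natrM en !expr1n -/x /lam.
rewrite /x /a. set N := (n`!)%:R. set P := poch _ n.
have hxi : forall i : nat, x + i%:R != 0.
  by move=> i; move: (hx i.+1); rewrite -natr1; congr (_ != 0); ring.
have g1 : 2%:R * m%:R + 1 + 2%:R * c != 0 :> F.
  by apply: (neq0_2 h8); field.
have g2 : 2%:R * m%:R + 1 - b != 0 :> F.
  by apply: (neq0_2 h7); field.
have g3 : 2%:R * m%:R + 2%:R != 0 :> F.
  by rewrite -natrM -natrD pnatr_eq0 addn2.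
have g4 : N != 0 by rewrite /N pnatr_eq0 -lt0n fact_gt0.
have g5 : poch ((1 + b) / 2%:R - m%:R) n != 0 by apply: poch_neq0 => i _; exact: hxi.
have g6 : poch (2%:R * c) n != 0.
  apply: poch_neq0 => i hi; apply: hc; apply: leq_trans hn; exact: ltnW.
have g7 : n%:R + 1 != 0 :> F by rewrite natr1 pnatr_eq0.
have g8 : 1 + b + - m%:R * 2%:R + n%:R * 2%:R != 0.
  by apply: (neq0_2 (hxi n)); rewrite /x; field.
have g9 : 2%:R * c + n%:R != 0 by apply: hc.
have g10 : - (2%:R * m%:R + 2%:R) + 1 != 0 :> F.
  rewrite (_ : _ + 1 = - (2%:R * m%:R + 1)); last by ring.
  by rewrite oppr_eq0 -natrM natr1 pnatr_eq0.
have g11 : 1 + b + - m%:R * 2%:R - 2%:R + n%:R * 2%:R != 0.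
  by apply: (neq0_2 (hx n)); rewrite /x; field.
have g12 : 1 + b + - m%:R * 2%:R - 2%:R != 0.
  by apply: (neq0_2 (hx 0)); rewrite /x; field.
field.
by rewrite g1 g2 g3 g4 g5 g6 g7 g8 g9 g10 g11 g12.
Qed.

Definition Sm b c (m : nat) := \sum_(n < (2 * m).+1) tm b c m n.

Definition rho b c (m : nat) :=
  poch (2%:R^-1) m * poch (c + 2%:R^-1 - b / 2%:R) m /
    (poch ((1 - b) / 2%:R) m * poch (c + 2%:R^-1) m).

Lemma recS b c (m : nat) :
  (forall i : nat, (1 + b) / 2%:R - (m.+1)%:R + i%:R != 0) ->
  (forall i : nat, (i <= 2 * m.+1)%N -> 2%:R * c + i%:R != 0) ->
  (1 - b) / 2%:R + m%:R != 0 -> c + 2%:R^-1 + m%:R != 0 ->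
  Sm b c m.+1 = lam b c m * Sm b c m.
Proof.
move=> hx hc h7 h8.
have ext : Sm b c m = \sum_(0 <= n < (2 * m.+1).+1) tm b c m n.
  rewrite /Sm -(big_mkord xpredT) [RHS](big_cat_nat _ (n := (2 * m).+1)) //=; last lia.
  rewrite [X in _ = _ + X]big_nat_cond [X in _ = _ + X]big1 ?addr0 // => i /andP[/andP[hi _] _].
  by rewrite /tm poch_negn // !mul0r.
have -> : Sm b c m.+1 = \sum_(0 <= n < (2 * m.+1).+1) tm b c m.+1 n.
  by rewrite /Sm -(big_mkord xpredT).
rewrite ext; apply/eqP; rewrite -subr_eq0; apply/eqP.
rewrite mulr_sumr -sumrB.
rewrite (eq_big_nat _ _ (F2 := fun n => Gm b c m n.+1 - Gm b c m n)); last first.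
  by move=> n /andP[_ hn]; apply: step.
rewrite telescope_sumr //.
have -> : Gm b c m (2 * m.+1).+1 = 0.
  by rewrite /Gm poch_negn // !mul0r.
by rewrite /Gm !mul0r mulr0 subrr.
Qed.

Lemma watson_gen b c (m : nat) :
  (forall i : nat, (1 + b) / 2%:R - m%:R + i%:R != 0) ->
  (forall i : nat, (i <= 2 * m)%N -> 2%:R * c + i%:R != 0) ->
  (forall i : nat, (i < m)%N -> (1 - b) / 2%:R + i%:R != 0) ->
  (forall i : nat, (i < m)%N -> c + 2%:R^-1 + i%:R != 0) ->
  Sm b c m = rho b c m.
Proof.
elim: m => [|m IH] H1 H2 H3 H4.
  rewrite /Sm /rho big_ord_recl big_ord0 /tm !poch0 expr0 /=.
  by rewrite !mul1r invr1 !mulr1 addr0.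
rewrite recS //; last by apply: H4.
rewrite IH //.
- rewrite /rho /lam !pochS !invfM; ring.
- move=> i; move: (H1 i.+1); congr (_ != 0); rewrite -!natr1; ring.
- move=> i hi; apply: H2; apply: leq_trans hi _; rewrite leq_mul2l /=; exact: leqnSn.
- by move=> i hi; apply: H3; apply: ltnW.
- by move=> i hi; apply: H4; apply: ltnW.
- by apply: H3.
Qed.

End W.

Local Open Scope complex_scope.

Theorem mainTheorem1 (R : realType) (m k : nat) (beta : R[i])
  (hm : (0 < m)%N) (hk : (0 < k)%N)
  (hbeta : forall j : nat, beta != - (j%:R))
  (hb2 : forall j : nat, (1 + beta) / 2%:R - m%:R != - (j%:R)) :
  F32_trunc (- (2 * m)%N%:R) beta (- (m + k)%N%:R - 2%:R^-1)
            (- (2 * m + 2 * k + 1)%N%:R) ((1 + beta) / 2%:R - m%:R) 1 (2 * m)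
  = (poch (2%:R^-1) m * poch ((2%:R + beta + (2 * k)%N%:R) / 2%:R) m)
    / (poch ((1 - beta) / 2%:R) m * poch (1 + k%:R) m).
Proof.
have h2 : (2%:R : R[i]) != 0 by rewrite pnatr_eq0.
set c : R[i] := - (m + k)%N%:R - 2%:R^-1.
have eb1 : - (2 * m + 2 * k + 1)%N%:R = 2%:R * c :> R[i].
  by rewrite /c !(natrD, natrM); field.
rewrite eb1.
rewrite (_ : F32_trunc _ _ _ _ _ _ _ = @Sm R[i] beta c m) //.
rewrite watson_gen.
- rewrite /rho.
  have e1 : c + 2%:R^-1 - beta / 2%:R = - ((2%:R + beta + (2 * k)%N%:R) / 2%:R) - m%:R + 1.
    by rewrite /c !(natrD, natrM); field.
  have e2 : c + 2%:R^-1 = - (1 + k%:R) - m%:R + 1.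
    by rewrite /c !(natrD, natrM); field.
  rewrite e1 e2 !poch_rev.
  set s : R[i] := (-1) ^+ m.
  have hs : s * s = 1 by rewrite /s -exprMn mulrNN mulr1 expr1n.
  rewrite invfM invr_signM -/s.
  set A := poch _ m; set B := poch _ m; set C := poch _ m; set D := poch _ m.
  transitivity (A * B * (C^-1 * D^-1) * (s * s)); first by ring.
  by rewrite hs mulr1 invfM.
- move=> i; move: (hb2 i); apply: contra => /eqP E; apply/eqP.
  by rewrite -[LHS](addrK i%:R) E sub0r.
- move=> i hi; rewrite -eb1 addrC subr_eq0 eqr_nat; lia.
- move=> i hi; move: (hb2 (m - i.+1)%N); apply: contra => /eqP E; apply/eqP.
  rewrite natrB // -natr1; apply/eqP; rewrite -subr_eq0.
  rewrite (_ : _ - _ = - ((1 - beta) / 2%:R + i%:R)); first by rewrite E oppr0.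
  by field.
- move=> i hi.
  rewrite (_ : c + 2%:R^-1 + i%:R = i%:R - (m + k)%N%:R); last by rewrite /c; field.
  rewrite subr_eq0 eqr_nat; lia.
Qed.
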